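(* Let $T=T_\lambda$ ($\lambda\in(1,2)$) be a tent map whose critical point $c$ has period $m\ge 3$, and let $K$ be its kneading sequence. (1) If for some $N\in\mathbb N$ a word $\mathbf s\in\{0,1\}^N$ is not the initial $N$-segment of $\mathcal I(x)$ for any $x\in[0,T(c)]$, then there is a segment (block of consecutive symbols) $\mathbf r$ of $\mathbf s$ with length $j\le m$ such that $\mathbf r\succ K|_j$. (2) If $\mathbf t\in\{0,1\}^{\mathbb N}$ satisfies $\sigma^k(\mathbf t)\succ K$ for some $k\ge 0$, then there is a segment $\mathbf r$ of $\mathbf t$ with length $j\le m$ such that $\mathbf r\succ K|_j$.
   Context: For $\lambda\in(1,2]$ the tent map $T_\lambda:[0,1]\to[0,1]$ is $T_\lambda(x)=\lambda x$ on $[0,1/2]$ and $\lambda(1-x)$ on $[1/2,1]$, with critical point $c=1/2$. $\Omega=\{0,1,C\}$. The address of $x$ is $0$ if $x<c$, $C$ if $x=c$, $1$ if $x>c$; the itinerary $\mathcal I(x)$ is the sequence of addresses of $x,T(x),T^2(x),\dots$; $\mathcal I^+(x)=\lim_{y\downarrow x}\mathcal I(y)$ (limit in the product topology on $\Omega^{\mathbb N}$). The kneading sequence is $K=\sigma(\mathcal I^+(c))$, $\sigma$ the shift. A word is finite string over $\Omega$; it is even if it contains an even number of $1$'s and odd otherwise. $\mathbf s|_k$ denotes the first $k$ symbols. Parity lexicographic order: set $0<C<1$; for two sequences (or two words of equal length) $\mathbf s\ne\mathbf t$ with first difference at index $k$ (i.e. $s_i=t_i$ for $i<k$, $s_k\ne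 t_k$), $\mathbf s\prec\mathbf t$ iff either $s_0\dots s_{k-1}$ is even and $s_k<t_k$, or $s_0\dots s_{k-1}$ is odd and $s_k>t_k$; $\succ$ is the reverse relation. *)

(* Defs.v *)
From Stdlib Require Import Reals Lra Lia.
Open Scope R_scope.

Inductive Omega : Set := Zero | One | Cs.

Definition orank (a : Omega) : nat :=
  match a with Zero => 0%nat | Cs => 1%nat | One => 2%nat end.

Definition tent (lam x : R) : R :=
  if Rle_dec x (1/2) then lam * x else lam * (1 - x).

Fixpoint tent_iter (lam : R) (n : nat) (x : R) : R :=
  match n with O => x | S k => tent lam (tent_iter lam k x) end.

Definition address (x : R) : Omega :=
  match total_order_T x (1/2) with
  | inleft (left _) => Zero
  | inleft (right _) => Cs
  | inright _ => One
  end.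

Definition itin (lam x : R) : nat -> Omega :=
  fun n => address (tent_iter lam n x).

(* s = I^+(x) = lim_{y downarrow x} I(y) in the product topology:
   every finite prefix of I(y) agrees with that of s for all y close to x on the right *)
Definition is_itin_plus (lam x : R) (s : nat -> Omega) : Prop :=
  forall n : nat, exists delta : R, delta > 0 /\
    forall y : R, x < y < x + delta -> forall i : nat, (i < n)%nat -> itin lam y i = s i.

Definition shift (s : nat -> Omega) : nat -> Omega := fun n => s (S n).
Definition shiftk (k : nat) (s : nat -> Omega) : nat -> Omega := fun n => s (k + n)%nat.

Definition is_kneading (lam : R) (K : nat -> Omega) : Prop :=
  exists s, is_itin_plus lam (1/2) s /\ K = shift s.

Fixpoint ones (s : nat -> Omega) (k : nat) : nat :=
  match k with
  | O => 0%nat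
  | S k' => (ones s k' + match s k' with One => 1 | _ => 0 end)%nat
  end.

Definition pl_gt_at (s t : nat -> Omega) (k : nat) : Prop :=
  (forall i, (i < k)%nat -> s i = t i) /\ s k <> t k /\
  ((Nat.even (ones s k) = true /\ (orank (s k) > orank (t k))%nat) \/
   (Nat.even (ones s k) = false /\ (orank (s k) < orank (t k))%nat)).

Definition seq_succ (s t : nat -> Omega) : Prop := exists k, pl_gt_at s t k.

Definition word_succ (j : nat) (s t : nat -> Omega) : Prop :=
  exists k, (k < j)%nat /\ pl_gt_at s t k.

Definition crit_period (lam : R) (m : nat) : Prop :=
  (m > 0)%nat /\ tent_iter lam m (1/2) = 1/2 /\
  forall p, (0 < p < m)%nat -> tent_iter lam p (1/2) <> 1/2.

Definition binary (a : Omega) : Prop := a = Zero \/ a = One.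

(* Main.v *)
Require Import Defs.
From Stdlib Require Import Reals Lra Lia Classical Arith.
Open Scope R_scope.

Lemma omega_dec (a b : Omega) : {a = b} + {a <> b}.
Proof. decide equality. Qed.

Lemma orank_inj a b : orank a = orank b -> a = b.
Proof. destruct a, b; simpl; congruence. Qed.

Lemma ones_ext (s t : nat -> Omega) k :
  (forall i, (i < k)%nat -> s i = t i) -> ones s k = ones t k.
Proof.
  induction k; simpl; intros H; auto.
  rewrite IHk by (intros; apply H; lia). rewrite (H k) by lia. reflexivity.
Qed.

Lemma ones_split t p j : ones t (p + j) = (ones t p + ones (shiftk p t) j)%nat.
Proof.
  induction j; simpl.
  - rewrite Nat.add_0_r. lia.
  - rewrite Nat.add_succ_r. simpl. rewrite IHj. unfold shiftk. lia.
Qed.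

Lemma first_diff (u v : nat -> Omega) N :
  (forall i, (i < N)%nat -> u i = v i) \/
  exists k, (k < N)%nat /\ (forall i, (i < k)%nat -> u i = v i) /\ u k <> v k.
Proof.
  induction N.
  - left; intros; lia.
  - destruct IHN as [H|[k [Hk [H1 H2]]]].
    + destruct (omega_dec (u N) (v N)).
      * left; intros i Hi. destruct (Nat.eq_dec i N). subst; auto. apply H; lia.
      * right; exists N; repeat split; auto.
    + right; exists k; repeat split; auto; lia.
Qed.

Lemma first_cs (u : nat -> Omega) N :
  (forall i, (i < N)%nat -> u i <> Cs) \/
  exists p, (p < N)%nat /\ u p = Cs /\ forall i, (i < p)%nat -> u i <> Cs.
Proof.
  induction N.
  - left; intros; lia.
  - destruct IHN as [H|[k [Hk [H1 H2]]]].
    + destruct (omega_dec (u N) Cs).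
      * right; exists N; repeat split; auto.
      * left; intros i Hi. destruct (Nat.eq_dec i N). subst; auto. apply H; lia.
    + right; exists k; repeat split; auto; lia.
Qed.

Lemma pl_gt_ext s s' t t' k :
  (forall i, (i <= k)%nat -> s i = s' i) -> (forall i, (i <= k)%nat -> t i = t' i) ->
  pl_gt_at s t k -> pl_gt_at s' t' k.
Proof.
  intros Hs Ht [H1 [H2 H3]]. unfold pl_gt_at.
  assert (E: ones s k = ones s' k) by (apply ones_ext; intros; apply Hs; lia).
  rewrite <- (Hs k), <- (Ht k) by lia. rewrite <- E.
  split; [|split; auto].
  intros i Hi. rewrite <- Hs, <- Ht by lia. auto.
Qed.

Lemma ws_ext N s s' t t' :
  (forall i, (i < N)%nat -> s i = s' i) -> (forall i, (i < N)%nat -> t i = t' i) ->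
  word_succ N s t -> word_succ N s' t'.
Proof.
  intros Hs Ht [k [Hk H]]. exists k; split; auto.
  eapply pl_gt_ext; [| |exact H]; intros; [apply Hs|apply Ht]; lia.
Qed.

Definition wle N (u v : nat -> Omega) :=
  (forall i, (i < N)%nat -> u i = v i) \/ word_succ N v u.

Lemma trich N u v :
  (forall i, (i < N)%nat -> u i = v i) \/ word_succ N u v \/ word_succ N v u.
Proof.
  destruct (first_diff u v N) as [H|[k [Hk [H1 H2]]]]; [left; auto|right].
  assert (E : ones u k = ones v k) by (apply ones_ext; auto).
  assert (Hr : orank (u k) <> orank (v k)) by (intro; apply H2; apply orank_inj; auto).
  destruct (Nat.even (ones u k)) eqn:Ev;
  destruct (Nat.lt_ge_cases (orank (u k)) (orank (v k))).
  - right. exists k. split; [exact Hk|]. split; [intros i Hi; symmetry; auto|].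
    split; [intro Hc; apply H2; symmetry; exact Hc|]. left. rewrite <- E. split; [exact Ev|lia].
  - left. exists k. split; [exact Hk|]. split; [intros i Hi; auto|].
    split; [exact H2|]. left. split; [exact Ev|lia].
  - left. exists k. split; [exact Hk|]. split; [intros i Hi; auto|].
    split; [exact H2|]. right. split; [exact Ev|lia].
  - right. exists k. split; [exact Hk|]. split; [intros i Hi; symmetry; auto|].
    split; [intro Hc; apply H2; symmetry; exact Hc|]. right. rewrite <- E. split; [exact Ev|lia].
Qed.

Lemma pl_trans u v w k1 k2 :
  pl_gt_at v u k1 -> pl_gt_at w v k2 -> pl_gt_at w u (Nat.min k1 k2).
Proof.
  intros [A1 [A2 A3]] [B1 [B2 B3]].
  destruct (Nat.lt_total k1 k2) as [Hl|[He|Hl]].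
  - rewrite Nat.min_l by lia.
    assert (Ew : w k1 = v k1) by (apply B1; lia).
    assert (Eo : ones w k1 = ones v k1) by (apply ones_ext; intros; apply B1; lia).
    split; [intros; rewrite <- A1 by lia; apply B1; lia|].
    rewrite Ew, Eo. auto.
  - subst k2. rewrite Nat.min_id.
    assert (Eo : ones w k1 = ones v k1) by (apply ones_ext; intros; apply B1; lia).
    split; [intros; rewrite <- A1 by lia; apply B1; lia|].
    rewrite Eo.
    destruct A3 as [[Ea Oa]|[Ea Oa]]; destruct B3 as [[Eb Ob]|[Eb Ob]];
      rewrite Eo in Eb; try congruence.
    + split; [intro Hc; rewrite Hc in *; lia|]. left; split; auto; lia.
    + split; [intro Hc; rewrite Hc in *; lia|]. right; split; auto; lia.
  - rewrite Nat.min_r by lia.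
    assert (Eu : u k2 = v k2) by (symmetry; apply A1; lia).
    split; [intros; rewrite <- A1 by lia; apply B1; lia|].
    rewrite Eu. auto.
Qed.

Lemma ws_trans N u v w : word_succ N v u -> word_succ N w v -> word_succ N w u.
Proof.
  intros [k1 [H1 P1]] [k2 [H2 P2]]. exists (Nat.min k1 k2). split; [lia|].
  eapply pl_trans; eauto.
Qed.

Lemma ws_irrefl N u : ~ word_succ N u u.
Proof. intros [k [_ [_ [H _]]]]. auto. Qed.

Lemma wle_trans N u v w : wle N u v -> wle N v w -> wle N u w.
Proof.
  intros [A|A] [B|B].
  - left; intros; rewrite A, B; auto.
  - right. eapply ws_ext; [| |exact B]; intros; auto. symmetry; auto.
  - right. eapply ws_ext; [| |exact A]; intros; auto.
  - right. eapply ws_trans; eauto.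
Qed.

Lemma ws_wle_false N u s : word_succ N u s -> wle N u s -> False.
Proof.
  intros H [E|W].
  - destruct H as [k [Hk [_ [H _]]]]. apply H; auto.
  - apply (ws_irrefl N u). eapply ws_trans; eauto.
Qed.

Lemma even_add_even x y : Nat.even x = true -> Nat.even (x + y) = Nat.even y.
Proof. intros H. rewrite Nat.even_add, H. destruct (Nat.even y); reflexivity. Qed.

Lemma even_add_odd x y : Nat.even x = false -> Nat.even (x + y) = negb (Nat.even y).
Proof. intros H. rewrite Nat.even_add, H. destruct (Nat.even y); reflexivity. Qed.

Lemma reduce (K t : nat -> Omega) m : (m > 0)%nat ->
  (forall i, K (i + m)%nat = K i) -> Nat.even (ones K m) = true ->
  forall d a, pl_gt_at (shiftk a t) K d ->
  exists a' d', (d' < m)%nat /\ (a' + d' = a + d)%nat /\ pl_gt_at (shiftk a' t) K d'.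
Proof.
  intros Hm Hp He d. induction d as [d IH] using lt_wf_ind. intros a H.
  destruct (Nat.lt_ge_cases d m). { exists a, d; auto. }
  assert (H' : pl_gt_at (shiftk (a+m) t) K (d - m)).
  { destruct H as [H1 [H2 H3]].
    assert (E1 : ones (shiftk a t) d = (ones (shiftk a t) m + ones (shiftk (a+m) t) (d-m))%nat).
    { replace d with (m + (d - m))%nat at 1 by lia. rewrite ones_split. f_equal.
      apply ones_ext. intros. unfold shiftk. f_equal. lia. }
    assert (E2 : ones (shiftk a t) m = ones K m) by (apply ones_ext; intros; apply H1; lia).
    rewrite E2 in E1. rewrite E1, (even_add_even _ _ He) in H3.
    assert (V1 : shiftk (a+m) t (d-m) = shiftk a t d) by (unfold shiftk; f_equal; lia).
    assert (V2 : K (d - m)%nat = K d) by (rewrite <- (Hp (d-m)%nat); f_equal; lia).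
    split; [|split].
    - intros i Hi. rewrite <- (Hp i).
      replace (shiftk (a+m) t i) with (shiftk a t (i+m)%nat) by (unfold shiftk; f_equal; lia).
      apply H1; lia.
    - rewrite V1, V2; auto.
    - rewrite V1, V2; auto. }
  destruct (IH (d-m)%nat ltac:(lia) (a+m)%nat H') as [a' [d' [X [Y Z]]]].
  exists a', d'. split; [exact X|split; [lia|exact Z]].
Qed.

Lemma ones_S t p : ones t (p + 1) = (ones t p + match t p with One => 1 | _ => 0 end)%nat.
Proof. rewrite Nat.add_1_r. reflexivity. Qed.

Lemma comb N p (u v s K : nat -> Omega) :
  (forall i, (i < p)%nat -> u i = v i) ->
  (forall j, (p + 1 + j < N)%nat -> u (p+1+j)%nat = K j /\ v (p+1+j)%nat = K j) ->
  (Nat.even (ones u p) = true -> u p = Zero /\ v p = One) ->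
  (Nat.even (ones u p) = false -> u p = One /\ v p = Zero) ->
  binary (s p) ->
  word_succ N s u -> word_succ N v s ->
  exists d, (p + 1 + d < N)%nat /\ pl_gt_at (shiftk (p+1) s) K d.
Proof.
  intros Huv HK Pe Po Hs [k1 [Hk1 [A1 [A2 A3]]]] [k2 [Hk2 [B1 [B2 B3]]]].
  assert (Hl1 : ~ (k1 < p)%nat /\ ~ (k2 < p)%nat).
  { destruct (Nat.lt_total k1 k2) as [Hl|[He|Hl]]; split; intro Hc.
    - apply A2. rewrite Huv by lia. symmetry. apply B1; lia.
    - apply A2. rewrite Huv by lia. symmetry. apply B1; lia.
    - subst k2.
      assert (E1 : ones s k1 = ones u k1) by (apply ones_ext; auto).
      assert (E2 : ones v k1 = ones s k1) by (apply ones_ext; auto).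
      assert (Eu : u k1 = v k1) by (apply Huv; lia).
      rewrite Eu, E1 in A3. rewrite E2, E1 in B3.
      destruct A3 as [[? ?]|[? ?]]; destruct B3 as [[? ?]|[? ?]]; try congruence; lia.
    - subst k2.
      assert (E1 : ones s k1 = ones u k1) by (apply ones_ext; auto).
      assert (E2 : ones v k1 = ones s k1) by (apply ones_ext; auto).
      assert (Eu : u k1 = v k1) by (apply Huv; lia).
      rewrite Eu, E1 in A3. rewrite E2, E1 in B3.
      destruct A3 as [[? ?]|[? ?]]; destruct B3 as [[? ?]|[? ?]]; try congruence; lia.
    - apply B2. rewrite <- Huv by lia. symmetry; apply A1; lia.
    - apply B2. rewrite <- Huv by lia. symmetry; apply A1; lia. }
  destruct Hl1 as [Hl1 Hl2].
  assert (Case : (s p = u p /\ Nat.even (ones u (p+1)) = true) \/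
                 (s p = v p /\ Nat.even (ones v (p+1)) = false)).
  { rewrite !ones_S.
    assert (Ev : ones v p = ones u p) by (apply ones_ext; intros; symmetry; auto).
    rewrite Ev.
    destruct (Nat.even (ones u p)) eqn:E.
    - destruct (Pe eq_refl) as [X Y]. rewrite X, Y.
      destruct Hs as [Z|Z]; rewrite Z.
      + left; split; auto. rewrite Nat.add_0_r; auto.
      + right; split; auto. rewrite Nat.add_1_r, Nat.even_succ, <- Nat.negb_even, E; auto.
    - destruct (Po eq_refl) as [X Y]. rewrite X, Y.
      destruct Hs as [Z|Z]; rewrite Z.
      + right; split; auto. rewrite Nat.add_0_r; auto.
      + left; split; auto. rewrite Nat.add_1_r, Nat.even_succ, <- Nat.negb_even, E; auto. }
  destruct Case as [[S1 P1]|[S1 P1]].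
  - assert (k1 <> p) by (intro; subst; auto).
    exists (k1 - p - 1)%nat. split; [lia|].
    assert (Ek : k1 = (p + 1 + (k1 - p - 1))%nat) by lia.
    assert (Es : ones s (p+1) = ones u (p+1)) by (apply ones_ext; intros; apply A1; lia).
    assert (Eo : ones s k1 = (ones s (p+1) + ones (shiftk (p+1) s) (k1 - p - 1))%nat)
      by (rewrite <- ones_split; f_equal; lia).
    rewrite Es in Eo. rewrite Eo, (even_add_even _ _ P1) in A3.
    assert (V1 : shiftk (p+1) s (k1 - p - 1) = s k1) by (unfold shiftk; f_equal; lia).
    assert (V2 : K (k1 - p - 1)%nat = u k1) by (rewrite Ek at 2; symmetry; apply HK; lia).
    split; [|rewrite V1, V2; split; auto].
    intros i Hi. unfold shiftk. rewrite A1 by lia. apply HK; lia.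
  - assert (k2 <> p) by (intro; subst; auto).
    exists (k2 - p - 1)%nat. split; [lia|].
    assert (Ek : k2 = (p + 1 + (k2 - p - 1))%nat) by lia.
    assert (Es : ones s (p+1) = ones v (p+1)) by (apply ones_ext; intros; symmetry; apply B1; lia).
    assert (Eo : ones v k2 = (ones s (p+1) + ones (shiftk (p+1) s) (k2 - p - 1))%nat)
      by (rewrite <- ones_split; replace (p + 1 + (k2 - p - 1))%nat with k2 by lia;
          apply ones_ext; auto).
    rewrite Es in Eo. rewrite Eo, (even_add_odd _ _ P1) in B3.
    assert (V1 : shiftk (p+1) s (k2 - p - 1) = s k2) by (unfold shiftk; f_equal; lia).
    assert (V2 : K (k2 - p - 1)%nat = v k2) by (rewrite Ek at 2; symmetry; apply HK; lia).
    split; [|rewrite V1, V2; split; [auto|]].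
    + intros i Hi. unfold shiftk. rewrite <- B1 by lia. apply HK; lia.
    + destruct (Nat.even (ones (shiftk (p + 1) s) (k2 - p - 1))); simpl in B3;
        destruct B3 as [[? ?]|[? ?]]; try discriminate; [left|right]; split; auto; lia.
Qed.

Lemma tent_iter_add lam a b x : tent_iter lam (a + b) x = tent_iter lam b (tent_iter lam a x).
Proof.
  induction b; simpl.
  - rewrite Nat.add_0_r; reflexivity.
  - rewrite Nat.add_succ_r. simpl. rewrite IHb. reflexivity.
Qed.

Lemma tent_iter_S' lam n x : tent_iter lam (S n) x = tent_iter lam n (tent lam x).
Proof. change (S n) with (1 + n)%nat. rewrite tent_iter_add. reflexivity. Qed.

Lemma itin_S lam x i : itin lam x (S i) = itin lam (tent lam x) i.
Proof. unfold itin. rewrite tent_iter_S'. reflexivity. Qed.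

Lemma itin_add lam x a i : itin lam x (a + i) = itin lam (tent_iter lam a x) i.
Proof. unfold itin. rewrite tent_iter_add. reflexivity. Qed.

Lemma address_lt x : x < 1/2 -> address x = Zero.
Proof. intros Hx; unfold address; destruct (total_order_T x (1/2)) as [[H|H]|H]; auto; lra. Qed.
Lemma address_gt x : x > 1/2 -> address x = One.
Proof. intros Hx; unfold address; destruct (total_order_T x (1/2)) as [[H|H]|H]; auto; lra. Qed.
Lemma address_half : address (1/2) = Cs.
Proof. unfold address; destruct (total_order_T (1/2) (1/2)) as [[H|H]|H]; auto; lra. Qed.
Lemma address_Zero x : address x = Zero -> x < 1/2.
Proof. unfold address; destruct (total_order_T x (1/2)) as [[H|H]|H]; auto; congruence. Qed.
Lemma address_One x : address x = One -> x > 1/2.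
Proof. unfold address; destruct (total_order_T x (1/2)) as [[H|H]|H]; auto; congruence. Qed.
Lemma address_Cs x : address x = Cs -> x = 1/2.
Proof. unfold address; destruct (total_order_T x (1/2)) as [[H|H]|H]; auto; congruence. Qed.

Lemma tent_le lam x : x <= 1/2 -> tent lam x = lam * x.
Proof. intros; unfold tent; destruct (Rle_dec x (1/2)); auto; lra. Qed.
Lemma tent_gt lam x : x > 1/2 -> tent lam x = lam * (1 - x).
Proof. intros; unfold tent; destruct (Rle_dec x (1/2)); auto; lra. Qed.
Lemma tent_c lam : tent lam (1/2) = lam / 2.
Proof. rewrite tent_le by lra. field. Qed.

Lemma lemA lam x y : 0 < lam -> x < y -> forall k,
  (forall i, (i < k)%nat -> itin lam x i = itin lam y i) ->
  (Nat.even (ones (itin lam x) k) = true /\ tent_iter lam k x < tent_iter lam k y) \/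
  (Nat.even (ones (itin lam x) k) = false /\ tent_iter lam k x > tent_iter lam k y).
Proof.
  intros Hl Hxy k. induction k; intros H.
  - left; simpl; split; auto.
  - assert (IH := IHk (fun i Hi => H i ltac:(lia))).
    assert (Hk := H k ltac:(lia)).
    change (ones (itin lam x) (S k)) with
      (ones (itin lam x) k + match itin lam x k with One => 1 | _ => 0 end)%nat.
    simpl tent_iter.
    unfold itin in Hk. change (itin lam x k) with (address (tent_iter lam k x)).
    set (a := tent_iter lam k x) in *. set (b := tent_iter lam k y) in *.
    destruct (address a) eqn:Ea.
    + assert (a < 1/2) by (apply address_Zero; auto).
      assert (b < 1/2) by (apply address_Zero; rewrite <- Hk; auto).
      rewrite !tent_le by lra. rewrite Nat.add_0_r.
      destruct IH as [[E L]|[E L]]; [left|right]; split; auto; nra.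
    + assert (a > 1/2) by (apply address_One; auto).
      assert (b > 1/2) by (apply address_One; rewrite <- Hk; auto).
      rewrite !tent_gt by lra. rewrite Nat.add_1_r, Nat.even_succ, <- Nat.negb_even.
      destruct IH as [[E L]|[E L]]; rewrite E; [right|left]; split; auto; nra.
    + assert (a = 1/2) by (apply address_Cs; auto).
      assert (b = 1/2) by (apply address_Cs; rewrite <- Hk; auto).
      destruct IH as [[E L]|[E L]]; lra.
Qed.

Lemma tent_lip lam a b : 0 < lam -> Rabs (tent lam a - tent lam b) <= lam * Rabs (a - b).
Proof.
  intros Hl. unfold tent. destruct (Rle_dec a (1/2)), (Rle_dec b (1/2));
  unfold Rabs; destruct (Rcase_abs _); destruct (Rcase_abs _); nra.
Qed.

Lemma iter_lip lam n a b : 0 < lam ->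
  Rabs (tent_iter lam n a - tent_iter lam n b) <= lam ^ n * Rabs (a - b).
Proof.
  intros Hl. induction n; simpl.
  - lra.
  - eapply Rle_trans; [apply tent_lip; auto|].
    rewrite Rmult_assoc. apply Rmult_le_compat_l; lra.
Qed.

Lemma addr_near a b : Rabs (a - b) < Rabs (b - 1/2) -> address a = address b.
Proof.
  intros H. destruct (total_order_T b (1/2)) as [[Hb|Hb]|Hb].
  - rewrite !address_lt; auto; unfold Rabs in H; destruct (Rcase_abs _); destruct (Rcase_abs _); lra.
  - subst. unfold Rabs in H; destruct (Rcase_abs _); destruct (Rcase_abs _); lra.
  - rewrite !address_gt; auto; unfold Rabs in H; destruct (Rcase_abs _); destruct (Rcase_abs _); lra.
Qed.

Lemma small_lt lam n e : 0 < lam -> e > 0 -> forall h, Rabs h < e / lam ^ n ->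
  lam ^ n * Rabs h < e.
Proof.
  intros Hl He h H. assert (P : 0 < lam ^ n) by (apply pow_lt; auto).
  apply (Rmult_lt_compat_l (lam ^ n)) in H; auto.
  replace (lam ^ n * (e / lam ^ n)) with e in H by (field; lra). auto.
Qed.

Lemma cont lam z N : 0 < lam -> (forall i, (i < N)%nat -> itin lam z i <> Cs) ->
  exists d, d > 0 /\ forall y, Rabs (y - z) < d ->
    forall i, (i < N)%nat -> itin lam y i = itin lam z i.
Proof.
  intros Hl. induction N; intros H.
  - exists 1; split; [lra|]. intros; lia.
  - destruct IHN as [d1 [Hd1 H1]]. { intros; apply H; lia. }
    set (e := Rabs (tent_iter lam N z - 1/2)).
    assert (He : e > 0).
    { unfold e. apply Rabs_pos_lt. intro Hc. apply (H N); [lia|].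
      unfold itin. replace (tent_iter lam N z) with (1/2) by lra. apply address_half. }
    assert (P : 0 < lam ^ N) by (apply pow_lt; auto).
    exists (Rmin d1 (e / lam ^ N)). split.
    { apply Rmin_glb_lt; auto. apply Rdiv_lt_0_compat; auto. }
    intros y Hy i Hi. destruct (Nat.eq_dec i N).
    + subst i. unfold itin. apply addr_near.
      eapply Rle_lt_trans; [apply iter_lip; auto|].
      apply small_lt; auto. eapply Rlt_le_trans; [exact Hy|apply Rmin_r].
    + apply H1; [|lia]. eapply Rlt_le_trans; [exact Hy|apply Rmin_l].
Qed.

Lemma nearc1 lam K : 0 < lam -> is_kneading lam K -> forall n, exists e, e > 0 /\
  forall t, tent lam (1/2) - e < t < tent lam (1/2) ->
    forall j, (j < n)%nat -> itin lam t j = K j.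
Proof.
  intros Hl [s0 [Hs HK]] n. destruct (Hs (S n)) as [d [Hd Hy]].
  exists (lam * d). split; [nra|]. rewrite tent_c.
  intros t Ht j Hj.
  set (u := t / lam). assert (Etu : t = lam * u) by (unfold u; field; lra).
  rewrite Etu in Ht.
  assert (Hu : 1/2 - d < u < 1/2) by (split; nra).
  assert (Ty : tent lam (1 - u) = t) by (rewrite tent_gt by lra; rewrite Etu; ring).
  rewrite <- Ty, <- itin_S, HK. unfold shift. apply Hy; [lra|lia].
Qed.

Lemma tent_near lam u : tent lam u = lam / 2 - lam * Rabs (u - 1/2).
Proof.
  destruct (Rle_dec u (1/2)).
  - rewrite tent_le, Rabs_left1 by lra. field.
  - rewrite tent_gt, Rabs_right by lra. field.
Qed.

Lemma nearC lam K z p n : 0 < lam -> is_kneading lam K ->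
  itin lam z p = Cs -> (forall i, (i < p)%nat -> itin lam z i <> Cs) ->
  exists d, d > 0 /\ forall y, 0 < Rabs (y - z) < d ->
   (forall i, (i < p)%nat -> itin lam y i = itin lam z i) /\
   (forall j, (p + 1 + j < n)%nat -> itin lam y (p+1+j) = K j) /\
   (y < z -> (Nat.even (ones (itin lam z) p) = true -> itin lam y p = Zero) /\
             (Nat.even (ones (itin lam z) p) = false -> itin lam y p = One)) /\
   (z < y -> (Nat.even (ones (itin lam z) p) = true -> itin lam y p = One) /\
             (Nat.even (ones (itin lam z) p) = false -> itin lam y p = Zero)).
Proof.
  intros Hl HK Hz Hp.
  destruct (cont lam z p Hl Hp) as [d1 [Hd1 H1]].
  destruct (nearc1 lam K Hl HK n) as [e [He H2]]. rewrite tent_c in H2.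
  assert (P : 0 < lam ^ p) by (apply pow_lt; auto).
  assert (Tz : tent_iter lam p z = 1/2) by (apply address_Cs; exact Hz).
  exists (Rmin d1 (e / lam / lam ^ p)). split.
  { apply Rmin_glb_lt; auto. repeat apply Rdiv_lt_0_compat; auto. }
  intros y [Hy0 Hy].
  assert (Hpre : forall i, (i < p)%nat -> itin lam y i = itin lam z i)
    by (apply H1; eapply Rlt_le_trans; [exact Hy|apply Rmin_l]).
  assert (Eo : ones (itin lam y) p = ones (itin lam z) p) by (apply ones_ext; auto).
  assert (Side : (y < z -> (Nat.even (ones (itin lam z) p) = true -> tent_iter lam p y < 1/2) /\
                          (Nat.even (ones (itin lam z) p) = false -> tent_iter lam p y > 1/2)) /\
                 (z < y -> (Nat.even (ones (itin lam z) p) = true -> tent_iter lam p y > 1/2) /\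
                          (Nat.even (ones (itin lam z) p) = false -> tent_iter lam p y < 1/2))).
  { split; intros Hyz.
    - destruct (lemA lam y z Hl Hyz p Hpre) as [[E L]|[E L]]; rewrite Eo in E; rewrite Tz in L;
        split; intro E'; try congruence; lra.
    - destruct (lemA lam z y Hl Hyz p (fun i Hi => eq_sym (Hpre i Hi))) as [[E L]|[E L]];
        rewrite Tz in L; split; intro E'; try congruence; lra. }
  assert (Hyz : y < z \/ z < y).
  { destruct (Rtotal_order y z) as [?|[?|?]]; auto. subst.
    rewrite Rminus_diag, Rabs_R0 in Hy0. lra. }
  assert (Hne : tent_iter lam p y <> 1/2).
  { destruct Side as [S1 S2].
    destruct (Nat.even (ones (itin lam z) p)) eqn:Ev; destruct Hyz as [Q|Q].
    - assert (X := proj1 (S1 Q) eq_refl); lra.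
    - assert (X := proj1 (S2 Q) eq_refl); lra.
    - assert (X := proj2 (S1 Q) eq_refl); lra.
    - assert (X := proj2 (S2 Q) eq_refl); lra. }
  split; [exact Hpre|split].
  - intros j Hj. rewrite itin_add. apply H2; [|lia].
    rewrite Nat.add_1_r. simpl tent_iter. rewrite tent_near.
    assert (A1 : Rabs (tent_iter lam p y - 1/2) > 0).
    { apply Rabs_pos_lt. lra. }
    assert (A2 : Rabs (tent_iter lam p y - 1/2) < e / lam).
    { rewrite <- Tz. eapply Rle_lt_trans; [apply iter_lip; auto|].
      apply small_lt; auto. { apply Rdiv_lt_0_compat; auto. }
      eapply Rlt_le_trans; [exact Hy|apply Rmin_r]. }
    assert (A3 : lam * Rabs (tent_iter lam p y - 1/2) < e).
    { apply (Rmult_lt_compat_l lam) in A2; auto.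
      replace (lam * (e / lam)) with e in A2 by (field; lra). auto. }
    split; nra.
  - destruct Side as [S1 S2]. unfold itin at 1 3. split; intro Q; split; intro Ev.
    + apply address_lt. apply (proj1 (S1 Q) Ev).
    + apply address_gt. apply (proj2 (S1 Q) Ev).
    + apply address_gt. apply (proj1 (S2 Q) Ev).
    + apply address_lt. apply (proj2 (S2 Q) Ev).
Qed.

Lemma kprops lam m K : 1 < lam -> crit_period lam m -> is_kneading lam K ->
  (forall i, K (i + m)%nat = K i) /\ Nat.even (ones K m) = true.
Proof.
  intros Hl [Hm [HTm Hnp]] [s0 [Hs HKe]].
  assert (Hl0 : 0 < lam) by lra.
  destruct m as [|m']; [lia|].
  set (c1 := tent lam (1/2)).
  assert (Hc1 : forall j, (j < m')%nat -> itin lam c1 j <> Cs).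
  { intros j Hj H. unfold itin, c1 in H. rewrite <- tent_iter_S' in H.
    apply (Hnp (S j)); [lia|]. apply address_Cs; auto. }
  destruct (cont lam c1 m' Hl0 Hc1) as [d1 [Hd1 H1]].
  assert (T1 : tent_iter lam m' c1 = 1/2) by (unfold c1; rewrite <- tent_iter_S'; auto).
  assert (Ec1 : c1 = lam / 2) by (apply tent_c).
  assert (main : forall n, exists y,
     (forall j, (j < n)%nat -> itin lam y j = s0 j) /\
     (forall j, (j < m')%nat -> itin lam (tent lam y) j = itin lam c1 j) /\
     tent lam y < c1 /\
     (tent_iter lam (S m') y > 1/2 -> forall j, (j < n)%nat -> itin lam (tent_iter lam (S m') y) j = s0 j) /\
     (tent_iter lam (S m') y < 1/2 -> forall j, (j < n)%nat -> (1 <= j)%nat ->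
        itin lam (tent_iter lam (S m') y) j = s0 j)).
  { intro n. destruct (Hs n) as [dl [Hdl Hy]].
    assert (P : 0 < lam ^ (S m')) by (apply pow_lt; auto).
    assert (Q1 : 0 < d1 / lam) by (apply Rdiv_lt_0_compat; auto).
    assert (Q2 : 0 < dl / lam ^ (S m')) by (apply Rdiv_lt_0_compat; auto).
    set (h := Rmin dl (Rmin (d1 / lam) (dl / lam ^ (S m'))) / 2).
    assert (Hh : 0 < h /\ h < dl /\ h < d1 / lam /\ h < dl / lam ^ (S m')).
    { unfold h. assert (X1 := Rmin_l dl (Rmin (d1 / lam) (dl / lam ^ (S m')))).
      assert (X2 := Rmin_r dl (Rmin (d1 / lam) (dl / lam ^ (S m')))).
      assert (X3 := Rmin_l (d1 / lam) (dl / lam ^ (S m'))).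
      assert (X4 := Rmin_r (d1 / lam) (dl / lam ^ (S m'))).
      assert (X5 : 0 < Rmin dl (Rmin (d1 / lam) (dl / lam ^ (S m'))))
        by (repeat apply Rmin_glb_lt; auto).
      lra. }
    destruct Hh as [h0 [h1 [h2 h3]]].
    exists (1/2 + h). split; [|split; [|split; [|split]]].
    - intros j Hj. apply Hy; [lra|auto].
    - apply H1. rewrite tent_gt by lra. rewrite Ec1.
      replace (lam * (1 - (1/2 + h)) - lam / 2) with (- (lam * h)) by field.
      rewrite Rabs_Ropp, Rabs_right by nra.
      apply (Rmult_lt_compat_l lam) in h2; auto.
      replace (lam * (d1 / lam)) with d1 in h2 by (field; lra). auto.
    - rewrite tent_gt by lra. rewrite Ec1. nra.
    - set (w := tent_iter lam (S m') (1/2 + h)).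
      assert (Hw : Rabs (w - 1/2) < dl).
      { rewrite <- HTm. unfold w. eapply Rle_lt_trans; [apply iter_lip; auto|].
        apply small_lt; auto. replace (1/2 + h - 1/2) with h by ring. rewrite Rabs_right by lra. auto. }
      intros Hw2 j Hj. apply Hy; [|auto]. unfold Rabs in Hw; destruct (Rcase_abs _); lra.
    - set (w := tent_iter lam (S m') (1/2 + h)).
      assert (Hw : Rabs (w - 1/2) < dl).
      { rewrite <- HTm. unfold w. eapply Rle_lt_trans; [apply iter_lip; auto|].
        apply small_lt; auto. replace (1/2 + h - 1/2) with h by ring. rewrite Rabs_right by lra. auto. }
      intros Hw2 j Hj Hj1. destruct j as [|j']; [lia|].
      rewrite itin_S.
      replace (tent lam w) with (tent lam (1 - w)).
      + rewrite <- itin_S. apply Hy; [|auto]. unfold Rabs in Hw; destruct (Rcase_abs _); lra.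
      + rewrite (tent_le lam w), (tent_gt lam (1 - w)) by lra. ring. }
  split.
  - intro i. destruct (main (i + S m' + 2)%nat) as [y [Y1 [Y2 [Y3 [Y4 Y5]]]]].
    assert (Tw : tent_iter lam (S m') y = tent_iter lam m' (tent lam y)) by apply tent_iter_S'.
    destruct (lemA lam (tent lam y) c1 Hl0 Y3 m' Y2) as [[E L]|[E L]];
      rewrite T1, <- Tw in L.
    + rewrite HKe. unfold shift. rewrite <- Y1 by lia.
      replace (S (i + S m')) with (S m' + S i)%nat by lia. rewrite itin_add.
      apply Y5; [exact L|lia|lia].
    + rewrite HKe. unfold shift. rewrite <- Y1 by lia.
      replace (S (i + S m')) with (S m' + S i)%nat by lia. rewrite itin_add.
      apply Y4; [exact L|lia].
  - destruct (main (S m' + 1)%nat) as [y [Y1 [Y2 [Y3 [Y4 Y5]]]]].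
    change (ones K (S m')) with (ones K m' + match K m' with One => 1 | _ => 0 end)%nat.
    assert (EK : forall j, (j <= m')%nat -> K j = itin lam (tent lam y) j).
    { intros j Hj. rewrite HKe. unfold shift. rewrite <- Y1 by lia. apply itin_S. }
    assert (Eo : ones K m' = ones (itin lam (tent lam y)) m')
      by (apply ones_ext; intros; apply EK; lia).
    rewrite Eo, EK by lia.
    destruct (lemA lam (tent lam y) c1 Hl0 Y3 m' Y2) as [[E L]|[E L]];
      rewrite T1 in L; unfold itin at 2.
    + rewrite address_lt by auto. rewrite Nat.add_0_r. auto.
    + rewrite address_gt by auto. rewrite Nat.add_1_r, Nat.even_succ, <- Nat.negb_even, E. auto.
Qed.

Lemma pick_left z d : 0 < z -> d > 0 -> exists y, 0 <= y < z /\ 0 < Rabs (y - z) < d.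
Proof.
  intros Hz Hd. set (r := Rmin (d/2) (z/2)).
  assert (r1 := Rmin_l (d/2) (z/2)). assert (r2 := Rmin_r (d/2) (z/2)).
  assert (r0 : 0 < r) by (apply Rmin_glb_lt; lra).
  fold r in r1, r2. exists (z - r). split; [lra|].
  replace (z - r - z) with (- r) by ring. rewrite Rabs_Ropp, Rabs_right by lra. lra.
Qed.

Lemma pick_right z c d : z < c -> d > 0 -> exists y, z < y <= c /\ 0 < Rabs (y - z) < d.
Proof.
  intros Hz Hd. set (r := Rmin (d/2) ((c - z)/2)).
  assert (r1 := Rmin_l (d/2) ((c - z)/2)). assert (r2 := Rmin_r (d/2) ((c - z)/2)).
  assert (r0 : 0 < r) by (apply Rmin_glb_lt; lra).
  fold r in r1, r2. exists (z + r). split; [lra|].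
  replace (z + r - z) with r by ring. rewrite Rabs_right by lra. lra.
Qed.

Lemma iter0 lam n : tent_iter lam n 0 = 0.
Proof. induction n; simpl; auto. rewrite IHn, tent_le by lra. ring. Qed.

Lemma itin0 lam i : itin lam 0 i = Zero.
Proof. unfold itin. rewrite iter0. apply address_lt. lra. Qed.

Lemma ones_zero (u : nat -> Omega) k : (forall i, u i = Zero) -> ones u k = 0%nat.
Proof. intros H. induction k; simpl; auto. rewrite IHk, H. reflexivity. Qed.

Lemma wle0 lam N s : wle N (itin lam 0) s.
Proof.
  destruct (trich N (itin lam 0) s) as [H|[H|H]]; [left; auto| |right; auto].
  exfalso. destruct H as [k [_ [_ [_ H3]]]].
  rewrite ones_zero in H3 by apply itin0. rewrite itin0 in H3. simpl in H3.
  destruct H3 as [[_ X]|[X _]]; [lia|discriminate].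
Qed.

Lemma addr_mono a b : a < b -> (orank (address a) <= orank (address b))%nat.
Proof.
  intros H. unfold address.
  destruct (total_order_T a (1/2)) as [[Ha|Ha]|Ha];
  destruct (total_order_T b (1/2)) as [[Hb|Hb]|Hb]; simpl; lia || lra.
Qed.

Lemma mono lam N x y : 0 < lam -> x < y -> wle N (itin lam x) (itin lam y).
Proof.
  intros Hl Hxy. destruct (first_diff (itin lam x) (itin lam y) N) as [H|[k [Hk [H1 H2]]]];
    [left; auto|right].
  exists k. split; [exact Hk|]. unfold pl_gt_at.
  assert (Eo : ones (itin lam y) k = ones (itin lam x) k) by (apply ones_ext; intros; symmetry; auto).
  assert (Hr : orank (itin lam x k) <> orank (itin lam y k)) by (intro; apply H2; apply orank_inj; auto).
  split; [intros i Hi; symmetry; apply H1; exact Hi|split; [intro Hc; apply H2; symmetry; exact Hc|]].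
  rewrite Eo.
  destruct (lemA lam x y Hl Hxy k H1) as [[E L]|[E L]]; [left|right]; split; auto.
  - assert (X := addr_mono _ _ L). unfold itin in Hr |- *. lia.
  - assert (X := addr_mono _ _ L). unfold itin in Hr |- *. lia.
Qed.

Lemma wle_ext N u u' s : wle N u s -> (forall i, (i < N)%nat -> u i = u' i) -> wle N u' s.
Proof.
  intros [H|H] E; [left; intros; rewrite <- E; auto|right].
  eapply ws_ext; [| |exact H]; auto.
Qed.

Theorem mainTheorem4 (lam : R) (m : nat) (K : nat -> Omega) :
  1 < lam < 2 ->
  crit_period lam m -> (m >= 3)%nat ->
  is_kneading lam K ->
  (* (1) *)
  (forall (N : nat) (s : nat -> Omega),
     (forall i, (i < N)%nat -> binary (s i)) ->
     (forall x, 0 <= x <= tent lam (1/2) ->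
        exists i, (i < N)%nat /\ itin lam x i <> s i) ->
     exists a j, (1 <= j <= m)%nat /\ (a + j <= N)%nat /\
       word_succ j (fun i => s (a + i)%nat) K)
  /\
  (* (2) *)
  (forall (t : nat -> Omega),
     (forall i, binary (t i)) ->
     (exists k, seq_succ (shiftk k t) K) ->
     exists a j, (1 <= j <= m)%nat /\
       word_succ j (fun i => t (a + i)%nat) K).
Proof.
  intros Hlam Hcp Hm3 HK.
  assert (Hl0 : 0 < lam) by lra.
  destruct (kprops lam m K ltac:(lra) Hcp HK) as [Kper Keven].
  assert (Hm0 : (m > 0)%nat) by lia.
  split.
  - intros N s Hbin Hnot.
    assert (GoalOf : forall a d, (a + d < N)%nat -> pl_gt_at (shiftk a s) K d ->
       exists a j, (1 <= j <= m)%nat /\ (a + j <= N)%nat /\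
       word_succ j (fun i => s (a + i)%nat) K).
    { intros a d Had P. destruct (reduce K s m Hm0 Kper Keven d a P) as [a' [d' [X [Y Z]]]].
      exists a', (S d'). split; [lia|split; [lia|]]. exists d'. split; [lia|exact Z]. }
    set (c1 := tent lam (1/2)).
    assert (Ec1 : c1 = lam / 2) by apply tent_c.
    assert (Hnot' : forall y, 0 <= y <= c1 -> (forall i, (i < N)%nat -> itin lam y i = s i) -> False).
    { intros y Hy Heq. destruct (Hnot y Hy) as [i [Hi Hne]]. apply Hne; auto. }
    set (Es := fun x => 0 <= x <= c1 /\ wle N (itin lam x) s).
    assert (E0 : Es 0) by (split; [lra|apply wle0]).
    assert (Hb : bound Es) by (exists c1; intros x [Hx _]; lra).
    destruct (completeness Es Hb (ex_intro _ 0 E0)) as [z [Hub Hlub]].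
    assert (Hz0 : 0 <= z) by (apply Hub; exact E0).
    assert (Hzc : z <= c1) by (apply Hlub; intros x [Hx _]; lra).
    assert (HinS : forall y, 0 <= y < z -> wle N (itin lam y) s).
    { intros y Hy. destruct (classic (exists x, Es x /\ y < x)) as [[x [[_ Ex] Hyx]]|Hn].
      - eapply wle_trans; [apply mono; eauto|exact Ex].
      - exfalso. assert (Hu : is_upper_bound Es y).
        { intros x Ex. destruct (Rle_lt_dec x y); auto. exfalso; apply Hn; eauto. }
        assert (X := Hlub y Hu). lra. }
    assert (HnotS : forall y, z < y <= c1 -> word_succ N (itin lam y) s).
    { intros y Hy. destruct (trich N (itin lam y) s) as [H|[H|H]].
      - exfalso. assert (Es y) by (split; [lra|left; auto]). assert (X := Hub y H0). lra.
      - exact H.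
      - exfalso. assert (Es y) by (split; [lra|right; auto]). assert (X := Hub y H0). lra. }
    destruct (Req_dec z c1) as [Zc|Zc].
    + destruct (nearc1 lam K Hl0 HK N) as [e [He He2]]. fold c1 in He2.
      destruct (pick_left z e) as [y [Hy1 Hy2]]; [rewrite Zc, Ec1; lra|auto|].
      assert (Hy3 : c1 - e < y < c1).
      { rewrite <- Zc. unfold Rabs in Hy2; destruct (Rcase_abs _); lra. }
      assert (W := HinS y Hy1). destruct W as [W|W].
      * exfalso. apply (Hnot' y); [lra|auto].
      * assert (W' : word_succ N s K).
        { eapply ws_ext; [| |exact W]; intros; auto. }
        destruct W' as [k [Hk P]]. apply (GoalOf 0%nat k); [lia|].
        eapply pl_gt_ext; [| |exact P]; intros; reflexivity.
    + assert (Zc' : z < c1) by lra.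
      destruct (first_cs (itin lam z) N) as [Hnc|[p [Hp [Hzp Hpre]]]].
      * exfalso. destruct (cont lam z N Hl0 Hnc) as [d [Hd Hc]].
        assert (Wz : wle N (itin lam z) s).
        { destruct (Req_dec z 0) as [Z0|Z0].
          - rewrite Z0. apply wle0.
          - destruct (pick_left z d) as [y [Hy1 Hy2]]; [lra|auto|].
            eapply wle_ext; [apply (HinS y Hy1)|]. apply Hc. lra. }
        destruct (pick_right z c1 d) as [y [Hy1 Hy2]]; auto.
        assert (Wy := HnotS y Hy1).
        apply (ws_wle_false N (itin lam z) s); auto.
        eapply ws_ext; [| |exact Wy]; auto. apply Hc. lra.
      * assert (Zp : 0 < z).
        { destruct (Req_dec z 0) as [Z0|Z0]; [|lra]. rewrite Z0, itin0 in Hzp. discriminate. }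
        destruct (nearC lam K z p N Hl0 HK Hzp Hpre) as [d [Hd Hc]].
        destruct (pick_left z d) as [yl [Hyl1 Hyl2]]; auto.
        destruct (pick_right z c1 d) as [yr [Hyr1 Hyr2]]; auto.
        destruct (Hc yl Hyl2) as [L1 [L2 [L3 _]]].
        destruct (Hc yr Hyr2) as [R1 [R2 [_ R4]]].
        specialize (L3 (proj2 Hyl1)). specialize (R4 (proj1 Hyr1)).
        assert (Wl : word_succ N s (itin lam yl)).
        { destruct (HinS yl Hyl1) as [W|W]; auto. exfalso. apply (Hnot' yl); [lra|auto]. }
        assert (Wr := HnotS yr Hyr1).
        assert (Eo : ones (itin lam yl) p = ones (itin lam z) p) by (apply ones_ext; auto).
        assert (A1 : forall i, (i < p)%nat -> itin lam yl i = itin lam yr i)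
          by (intros i Hi; rewrite L1, R1; auto).
        assert (A2 : forall j, (p + 1 + j < N)%nat ->
                 itin lam yl (p+1+j)%nat = K j /\ itin lam yr (p+1+j)%nat = K j)
          by (intros j Hj; split; [apply L2|apply R2]; lia).
        assert (A3 : Nat.even (ones (itin lam yl) p) = true -> itin lam yl p = Zero /\ itin lam yr p = One)
          by (rewrite Eo; intro Ev; split; [apply (proj1 L3)|apply (proj1 R4)]; auto).
        assert (A4 : Nat.even (ones (itin lam yl) p) = false -> itin lam yl p = One /\ itin lam yr p = Zero)
          by (rewrite Eo; intro Ev; split; [apply (proj2 L3)|apply (proj2 R4)]; auto).
        destruct (comb N p (itin lam yl) (itin lam yr) s K A1 A2 A3 A4 (Hbin p Hp) Wl Wr)
          as [d' [Hd' P]].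
        apply (GoalOf (p+1)%nat d'); [lia|exact P].
  - intros t Hb [k [d P]].
    destruct (reduce K t m Hm0 Kper Keven d k P) as [a' [d' [X [Y Z]]]].
    exists a', (S d'). split; [lia|]. exists d'. split; [lia|exact Z].
Qed.
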